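(* Let $d\in\{1,2,3,7,11\}$, $K=\mathbb{Q}(\sqrt{-d})$, $\mathcal{O}_d$ its ring of integers, $\Delta$ a positive integer not of the form $\beta\bar\beta$ with $\beta\in\mathcal{O}_d$, and $k\ge1$ odd. Let $$H_{k,\Delta}(z)=\sum_{\substack{(a,b,c)\in\mathbb{Z}\times\mathcal{O}_d\times\mathbb{Z}\\ b\bar b-ac=\Delta,\ a<0}}\max\left(0,\left(a|z|^2+bz+\bar b\bar z+c\right)^k\right).$$ Then for all $z\in\mathbb{C}$: (1) $H_{k,\Delta}(\bar z)=H_{k,\Delta}(z)$; (2) $H_{k,\Delta}(uz)=H_{k,\Delta}(z)$ for every unit $u\in\mathcal{O}_d^\times$; (3) $H_{k,\Delta}(z+\lambda)=H_{k,\Delta}(z)$ for every $\lambda\in\mathcal{O}_d$. *)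

(* Defs.v *)
From mathcomp Require Import all_boot all_order all_algebra.
From mathcomp Require Import all_classical all_reals all_analysis.
From mathcomp Require Export complex.
Import GRing.Theory Num.Theory.

Unset Printing Implicit Defensive.

Local Open Scope ring_scope.
Local Open Scope complex_scope.
Local Open Scope classical_set_scope.

(* The standard Z-generator omega_d of the ring of integers O_d of Q(sqrt(-d)),
   for squarefree d > 0:  omega_d = sqrt(-d)        if -d = 2,3 mod 4 (d = 1, 2),
                          omega_d = (1+sqrt(-d))/2  if -d = 1 mod 4  (d = 3, 7, 11). *)
Definition omega_d (R : realType) (d : nat) : R[i] :=
  if (d == 1)%N || (d == 2)%N then 0 +i* Num.sqrt (d%:R : R)
  else (2%:R^-1) +i* (Num.sqrt (d%:R : R) / 2%:R).

Definition O_d (R : realType) (d : nat) : set R[i] :=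
  [set z | exists x y : int, z = (x%:~R)%:C + (y%:~R)%:C * omega_d R d].

Definition unit_O_d (R : realType) (d : nat) (u : R[i]) : Prop :=
  O_d R d u /\ exists v, O_d R d v /\ u * v = 1.

Definition H_index (R : realType) (d Delta : nat) : set (int * R[i] * int) :=
  [set t | O_d R d t.1.2 /\
           t.1.2 * t.1.2^* - ((t.1.1 * t.2)%:~R)%:C = (Delta%:R)%:C /\
           (t.1.1 < 0)%R].

Definition H_form (R : realType) (t : int * R[i] * int) (z : R[i]) : R :=
  complex.Re ((t.1.1%:~R)%:C * (z * z^*) + t.1.2 * z + t.1.2^* * z^*
              + (t.2%:~R)%:C).

Definition H_kDelta (R : realType) (d k Delta : nat) (z : R[i]) : \bar R :=
  \esum_(t in H_index R d Delta) (Num.max 0 (H_form R t z ^+ k))%:E.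

(* Main.v *)
Require Import Defs.
From mathcomp Require Import all_boot all_order all_algebra.
From mathcomp Require Import all_classical all_reals all_analysis.
From mathcomp Require Import complex.
From mathcomp Require Import ring lra zify.
Import GRing.Theory Num.Theory.
Local Open Scope ring_scope.
Local Open Scope complex_scope.
Local Open Scope classical_set_scope.

Lemma esum_reindex_eq (R : realType) (T : choiceType) (A : set T) (F G : T -> \bar R)
  (g h : T -> T) :
  (forall t, A t -> A (g t)) -> (forall t, A t -> A (h t)) ->
  (forall t, A t -> h (g t) = t) -> (forall t, A t -> g (h t) = t) ->
  (forall t, A t -> F (g t) = G t) ->
  \esum_(t in A) F t = \esum_(t in A) G t.
Proof.
move=> Ag Ah hg gh FG.
rewrite (@reindex_esum R T T A A g F); last first.
  split.
  - by move=> t /Ag.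
  - move=> x y /set_mem Ax /set_mem Ay e.
    by rewrite -(hg x Ax) -(hg y Ay) e.
  - move=> t At; exists (h t); [exact: Ah | exact: gh].
by apply: eq_esum => t At; exact: FG.
Qed.

Lemma Cint (R : realType) (x : int) : ((x%:~R : R)%:C : R[i]) = x%:~R.
Proof. exact: (rmorph_int (@real_complex R)). Qed.

Lemma ReN (R : realType) (x : R[i]) : complex.Re (- x) = - complex.Re x.
Proof. by case: x. Qed.

Lemma ReCint (R : realType) (x : int) : complex.Re (x%:~R : R[i]) = x%:~R.
Proof. by rewrite -Cint. Qed.

Lemma NumconjE (R : realType) (a : R[i]) : Num.conj a = conjc a.
Proof. by []. Qed.

Lemma conjInt (R : realType) (x : int) : conjc (x%:~R : R[i]) = x%:~R.
Proof. exact: (rmorph_int (@conjc R)). Qed.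
Section Od.
Variables (R : realType) (w : R[i]) (s m : int).
Hypothesis hs : w + conjc w = s%:~R.
Hypothesis hm : w * conjc w = m%:~R.

Definition Odw : set R[i] := [set z | exists x y : int, z = x%:~R + y%:~R * w].
Lemma OdE z : Odw z <-> exists x y : int, z = x%:~R + y%:~R * w.
Proof. by []. Qed.

Lemma wc : conjc w = s%:~R - w.
Proof. by rewrite -hs addrC addKr. Qed.

Lemma w2 : w * w = s%:~R * w - m%:~R.
Proof. by rewrite -hm -hs; ring. Qed.

Lemma Od_conj z : Odw z -> Odw (conjc z).
Proof.
move=> /OdE [x [y ->]]; apply/OdE; exists (x + y * s), (- y).
by rewrite rmorphD rmorphM /= !conjInt wc intrD intrM intrN; ring.
Qed.

Lemma Od_mul a b : Odw a -> Odw b -> Odw (a * b).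
Proof.
move=> /OdE [x [y ->]] /OdE [x' [y' ->]]; apply/OdE.
exists (x * x' - y * y' * m), (x * y' + x' * y + y * y' * s).
rewrite !(intrD, intrM, intrN, intrB).
have -> : (x%:~R + y%:~R * w) * (x'%:~R + y'%:~R * w) =
  x%:~R * x'%:~R + (x%:~R * y'%:~R + x'%:~R * y%:~R) * w + y%:~R * y'%:~R * (w * w) :> R[i]
  by ring.
by rewrite w2; ring.
Qed.

Lemma Od_opp a : Odw a -> Odw (- a).
Proof.
move=> /OdE [x [y ->]]; apply/OdE; exists (- x), (- y).
by rewrite !intrN; ring.
Qed.

Lemma Od_add a b : Odw a -> Odw b -> Odw (a + b).
Proof.
move=> /OdE [x [y ->]] /OdE [x' [y' ->]]; apply/OdE; exists (x + x'), (y + y').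
by rewrite !intrD; ring.
Qed.

Lemma Od_int (n : int) : Odw n%:~R.
Proof. by apply/OdE; exists n, 0; rewrite mul0r addr0. Qed.

Lemma Od_norm z : Odw z -> exists n : int, z * conjc z = n%:~R.
Proof.
move=> /OdE [x [y ->]]; exists (x * x + x * y * s + y * y * m).
rewrite rmorphD rmorphM /= !conjInt !(intrD, intrM).
have -> : (x%:~R + y%:~R * w) * (x%:~R + y%:~R * conjc w) =
  x%:~R * x%:~R + x%:~R * y%:~R * (w + conjc w) + y%:~R * y%:~R * (w * conjc w) :> R[i]
  by ring.
by rewrite hs hm.
Qed.

Lemma Od_trace z : Odw z -> exists n : int, z + conjc z = n%:~R.
Proof.
move=> /OdE [x [y ->]]; exists (x + x + y * s).
rewrite rmorphD rmorphM /= !conjInt !(intrD, intrM).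
have -> : (x%:~R + y%:~R * w) + (x%:~R + y%:~R * conjc w) =
  x%:~R + x%:~R + y%:~R * (w + conjc w) :> R[i] by ring.
by rewrite hs.
Qed.

End Od.

Lemma O_dE (R : realType) d z : O_d R d z <-> Odw R (omega_d R d) z.
Proof.
by split => -[x [y ->]]; exists x, y; rewrite !Cint.
Qed.


Lemma omega_facts (R : realType) (d : nat) : d \in [:: 1; 2; 3; 7; 11]%N ->
  exists s m : int, omega_d R d + conjc (omega_d R d) = s%:~R /\
                    omega_d R d * conjc (omega_d R d) = m%:~R.
Proof.
rewrite !inE => hd.
have hs : 0 <= (d%:R : R) by [].
have hq := sqr_sqrtr hs.
rewrite /omega_d.
move: hq; set r := Num.sqrt _ => hq.
move: hd => /orP[|/orP[|/orP[|/orP[]]]] /eqP ? ; subst d; rewrite /= in hq *; rewrite expr2 in hq.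
- exists 0, 1; split; apply/eqP; rewrite -Cint eq_complex /=; apply/andP; split; apply/eqP; nra.
- exists 0, 2; split; apply/eqP; rewrite -Cint eq_complex /=; apply/andP; split; apply/eqP; nra.
- exists 1, 1; split; apply/eqP; rewrite -Cint eq_complex /=; apply/andP; split; apply/eqP; nra.
- exists 1, 2; split; apply/eqP; rewrite -Cint eq_complex /=; apply/andP; split; apply/eqP; nra.
- exists 1, 3; split; apply/eqP; rewrite -Cint eq_complex /=; apply/andP; split; apply/eqP; nra.
Qed.

Lemma fl_int {R : realType} {x : R[i]} {e : int} : x = e%:~R -> Num.floor (complex.Re x) = e.
Proof. by move->; rewrite ReCint intrKfloor. Qed.

Definition gl {R : realType} (l : R[i]) (t : int * R[i] * int) : int * R[i] * int :=
  (t.1.1, t.1.2 - t.1.1%:~R * conjc l,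
   t.2 + Num.floor (complex.Re (t.1.1%:~R * (l * conjc l) - (t.1.2 * l + conjc (t.1.2 * l))))).

Local Close Scope classical_set_scope.

Theorem proposition2p3 (R : realType) (d k Delta : nat) :
  d \in [:: 1; 2; 3; 7; 11]%N ->
  (0 < Delta)%N ->
  ~ (exists beta : R[i], O_d R d beta /\ (Delta%:R)%:C = beta * beta^*) ->
  odd k ->
  forall z : R[i],
    H_kDelta R d k Delta z^* = H_kDelta R d k Delta z /\
    (forall u : R[i], unit_O_d R d u ->
       H_kDelta R d k Delta (u * z) = H_kDelta R d k Delta z) /\
    (forall lambda : R[i], O_d R d lambda ->
       H_kDelta R d k Delta (z + lambda) = H_kDelta R d k Delta z).
Proof.
move=> hd _ _ _ z.
have [s [m [hs hm]]] := omega_facts R d hd.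
have Oconj x : O_d R d x -> O_d R d (conjc x).
  by move=> /O_dE Ox; apply/O_dE; exact: Od_conj hs _ Ox.
have Omul x y : O_d R d x -> O_d R d y -> O_d R d (x * y).
  by move=> /O_dE Ox /O_dE Oy; apply/O_dE; exact: Od_mul hs hm _ _ Ox Oy.
have Oadd x y : O_d R d x -> O_d R d y -> O_d R d (x + y).
  by move=> /O_dE Ox /O_dE Oy; apply/O_dE; apply: Od_add Ox Oy.
have Oopp x : O_d R d x -> O_d R d (- x).
  by move=> /O_dE Ox; apply/O_dE; apply: Od_opp Ox.
have Oint (n : int) : O_d R d n%:~R by apply/O_dE; apply: Od_int.
have Onorm x : O_d R d x -> exists n : int, x * conjc x = n%:~R.
  by move=> /O_dE Ox; exact: Od_norm hs hm _ Ox.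
have Otr x : O_d R d x -> exists n : int, x + conjc x = n%:~R.
  by move=> /O_dE Ox; apply: Od_trace hs _ Ox.
split; [|split].
- rewrite /H_kDelta.
  apply: (@esum_reindex_eq R _ _ _ _ (fun t => (t.1.1, conjc t.1.2, t.2))
                          (fun t => (t.1.1, conjc t.1.2, t.2))).
  + move=> [[a b] c]; rewrite /H_index /= => -[Ob [E neg]].
    split; first exact: Oconj. split => //.
    by rewrite !NumconjE conjcK mulrC -E.
  + move=> [[a b] c]; rewrite /H_index /= => -[Ob [E neg]].
    split; first exact: Oconj. split => //.
    by rewrite !NumconjE conjcK mulrC -E.
  + by move=> [[a b] c] _ /=; rewrite conjcK.
  + by move=> [[a b] c] _ /=; rewrite conjcK.
  + move=> [[a b] c] _ /=; rewrite /H_form /= !NumconjE !conjcK.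
    by congr ((Num.max 0 ((complex.Re _) ^+ k))%:E); ring.
- move=> u [Ou [v [Ov uv]]].
  have huu : u * conjc u = 1.
    have [n hn] := Onorm u Ou.
    have [n' hn'] := Onorm v Ov.
    have h1 : ((n * n')%:~R : R[i]) = 1%:~R.
      rewrite intrM -hn -hn'.
      have -> : u * conjc u * (v * conjc v) = (u * v) * conjc (u * v).
        by rewrite rmorphM /=; ring.
      by rewrite uv mul1r; exact: (conjInt R 1).
    have h2 := intr_inj h1.
    have h3 : (0 : R) <= n%:~R.
      rewrite -ReCint -hn; case: (u) => a b /=; nra.
    have h3' : (0 : R) <= n'%:~R.
      rewrite -ReCint -hn'; case: (v) => a b /=; nra.
    rewrite ler0z in h3; rewrite ler0z in h3'.
    case: n hn h1 h2 h3 => [nn|nn] hn h1 h2 h3 //.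
    case: n' hn' h1 h2 h3' => [nn'|nn'] hn' h1 h2 h3' //.
    move/eqP: h2; rewrite -PoszM eqz_nat muln_eq1 => /andP[/eqP e _].
    by rewrite hn e.
  rewrite /H_kDelta.
  apply: (@esum_reindex_eq R _ _ _ _ (fun t => (t.1.1, t.1.2 * conjc u, t.2))
                          (fun t => (t.1.1, t.1.2 * u, t.2))).
  + move=> [[a b] c]; rewrite /H_index /= => -[Ob [E neg]].
    split; first by apply: Omul => //; exact: Oconj.
    split => //; rewrite -E !NumconjE rmorphM /= conjcK.
    by apply/eqP; rewrite -subr_eq0; apply/eqP;
      transitivity ((u * conjc u - 1) * (b * conjc b)); [ring | rewrite huu subrr mul0r].
  + move=> [[a b] c]; rewrite /H_index /= => -[Ob [E neg]].
    split; first by apply: Omul.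
    split => //; rewrite -E !NumconjE rmorphM /=.
    by apply/eqP; rewrite -subr_eq0; apply/eqP;
      transitivity ((u * conjc u - 1) * (b * conjc b)); [ring | rewrite huu subrr mul0r].
  + move=> [[a b] c] _ /=; congr (_, _, _).
    by transitivity (b * (u * conjc u)); [ring | rewrite huu mulr1].
  + move=> [[a b] c] _ /=; congr (_, _, _).
    by transitivity (b * (u * conjc u)); [ring | rewrite huu mulr1].
  + move=> [[a b] c] _ /=; rewrite /H_form /= !NumconjE !rmorphM /= !conjcK.
    congr ((Num.max 0 ((complex.Re _) ^+ k))%:E).
    apply/eqP; rewrite -subr_eq0; apply/eqP.
    transitivity ((u * conjc u - 1) * ((a%:~R : R)%:C * (z * conjc z) + b * z + conjc b * conjc z)).
      ring.
    by rewrite huu subrr mul0r.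
- move=> l Ol.
  have key (l' : R[i]) (a : int) (b : R[i]) : O_d R d l' -> O_d R d b ->
      exists e : int, a%:~R * (l' * conjc l') - (b * l' + conjc (b * l')) = e%:~R.
    move=> Ol' Ob.
    have [n hn] := Onorm l' Ol'.
    have [n' hn'] := Otr (b * l') (Omul _ _ Ob Ol').
    by exists (a * n - n'); rewrite hn hn' intrB intrM.
  have Ag (l' : R[i]) t : O_d R d l' -> H_index R d Delta t -> H_index R d Delta (gl (R:=R) l' t).
    move=> Ol'; case: t => [[a b] c]; rewrite /H_index /gl /= => -[Ob [E neg]].
    split; first by apply: Oadd => //; apply: Oopp; apply: Omul => //; exact: Oconj.
    split => //.
    have [e he] := key l' a b Ol' Ob.
    rewrite (fl_int he) -E !Cint intrM intrD -he !NumconjE !rmorphB !rmorphM /= conjcK conjInt.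
    ring.
  have gg (l' : R[i]) t : O_d R d l' -> H_index R d Delta t -> gl (- l') (gl (R:=R) l' t) = t.
    move=> Ol'; case: t => [[a b] c]; rewrite /H_index /gl /= => -[Ob [E neg]].
    have [e he] := key l' a b Ol' Ob.
    rewrite (fl_int he).
    have he2 : a%:~R * (- l' * conjc (- l')) -
        ((b - a%:~R * conjc l') * - l' + conjc ((b - a%:~R * conjc l') * - l')) = (- e)%:~R.
      rewrite intrN -he !(rmorphM, rmorphB, rmorphN) /= conjcK conjInt; ring.
    rewrite (fl_int he2) addrK; congr (_, _, _).
    by rewrite rmorphN /=; ring.
  rewrite /H_kDelta.
  apply: (@esum_reindex_eq R _ _ _ _ (gl l) (gl (- l))).
  + by move=> t; apply: Ag.
  + by move=> t; apply: Ag; apply: Oopp.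
  + by move=> t; apply: gg.
  + move=> t At; rewrite -{1}(opprK l); apply: gg => //; exact: Oopp.
  + move=> [[a b] c] At; have [Ob _] := At.
    have [e he] := key l a b Ol Ob.
    rewrite /H_form /gl /= (fl_int he) !NumconjE !Cint.
    congr ((Num.max 0 ((complex.Re _) ^+ k))%:E).
    rewrite intrD -he !(rmorphM, rmorphB, rmorphD) /= conjcK conjInt; ring.
Qed.
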